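(* Let $F$ be a nonempty face of $V_0$ and $\lambda\in\Xi$. Then $\lambda\in\mathcal U(F)$ (i.e. $F\subseteq F_\lambda$) if and only if $N_\lambda\ge\phi(F)$ in $\mathcal{SC}(\mathcal M)$.
   Context: Let $\mathcal M$ be a regular matroid on a finite ground set $E$, represented by a totally unimodular matrix $M$ with columns $c_e$; $\mathcal F=\ker M\subseteq\mathbb R^E$ with Euclidean inner product, $\Lambda=\ker M\cap\mathbb Z^E$, $V_0=\{x\in\mathcal F:\|x\|\le\|x-\mu\|\ \forall\mu\in\Lambda\}$. A circuit in $\Lambda$ is a flow with coordinates in $\{-1,0,1\}$ whose support is a circuit (minimal dependent set of columns) of $\mathcal M$; $\Xi$ is the set of these. For $\gamma\in\Xi$, $F_\gamma=\{x\in\mathcal F:2\langle x,\gamma\rangle=\|\gamma\|^2\}$. An oriented submatroid is $(S,\varepsilon)$, $S\subseteq E$, $\varepsilon:S\to\{\pm1\}$; it is strongly connected if for every $e\in S$ there is $w\in\mathbb Z_{\ge0}^S$ with $w_e\ge1$ and $\sum_{f\in S}w_f\varepsilon_fc_f=0$. $\mathcal{SC}(\mathcal M)$ is the set of these, ordered by $(S,\varepsilon)\le(S',\varepsilon')$ iff $S'\subseteq S$ and $\varepsilon'=\varepsilon|_{S'}$. For $\lambda\in\Lambda$, $N_\lambda=(\operatorname{supp}\lambda,\ e\mapsto\operatorname{sgn}\lambda_e)$. For a nonempty face $F$ of $V_0$, $\mathcal U(F)=\{\gamma\in\Xi:F\subseteq F_\gamma\}$ and $\phi(F)=(S,\varepsilon)$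 with $S=\bigcup_{\gamma\in\mathcal U(F)}\operatorname{supp}\gamma$ and $\varepsilon_e=\operatorname{sgn}\gamma_e$ for any $\gamma\in\mathcal U(F)$ with $e\in\operatorname{supp}\gamma$ (this is well defined and lies in $\mathcal{SC}(\mathcal M)$). *)

(* Defs.v *)
From HB Require Import structures.
From mathcomp Require Import all_boot all_order all_algebra.
From mathcomp Require Import reals.
From Stdlib Require Import ClassicalEpsilon.
Set Implicit Arguments. Unset Strict Implicit. Unset Printing Implicit Defensive.
Import Order.TTheory GRing.Theory Num.Theory.
Local Open Scope ring_scope.

(* Ground set E = 'I_m; M : 'M[int]_(r, m), columns c_e = col e M. *)

Definition totally_unimodular (r m : nat) (M : 'M[int]_(r, m)) : Prop :=
  forall (k : nat) (f : 'I_k -> 'I_r) (g : 'I_k -> 'I_m),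
    \det (mxsub f g M) \in [:: -1; 0; 1].

Definition dotR (R : realType) (m : nat) (x y : 'I_m -> R) : R :=
  \sum_(e < m) x e * y e.
Definition normR (R : realType) (m : nat) (x : 'I_m -> R) : R :=
  Num.sqrt (dotR x x).

Definition intv (R : realType) (m : nat) (v : 'I_m -> int) : 'I_m -> R :=
  fun e => (v e)%:~R.

Definition in_flow_space (R : realType) (r m : nat) (M : 'M[int]_(r, m))
  (x : 'I_m -> R) : Prop :=
  forall i : 'I_r, \sum_(e < m) (M i e)%:~R * x e = 0.

Definition in_lattice (r m : nat) (M : 'M[int]_(r, m)) (mu : 'I_m -> int) : Prop :=
  forall i : 'I_r, \sum_(e < m) M i e * mu e = 0.

Definition voronoi0 (R : realType) (r m : nat) (M : 'M[int]_(r, m))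
  (x : 'I_m -> R) : Prop :=
  in_flow_space M x /\
  forall mu : 'I_m -> int, in_lattice M mu ->
    normR x <= normR (fun e => x e - intv R mu e).

Definition dependent_cols (R : realType) (r m : nat) (M : 'M[int]_(r, m))
  (S : {set 'I_m}) : Prop :=
  exists x : 'I_m -> R, (exists e, x e != 0) /\
    (forall e, x e != 0 -> e \in S) /\ in_flow_space M x.

Definition is_circuit (R : realType) (r m : nat) (M : 'M[int]_(r, m))
  (S : {set 'I_m}) : Prop :=
  dependent_cols R M S /\ forall T : {set 'I_m}, T \proper S -> ~ dependent_cols R M T.

Definition supp (m : nat) (g : 'I_m -> int) : {set 'I_m} := [set e | g e != 0].

Definition is_circuit_flow (R : realType) (r m : nat) (M : 'M[int]_(r, m))
  (g : 'I_m -> int) : Prop :=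
  (forall e, g e \in [:: -1; 0; 1]) /\ in_lattice M g /\ is_circuit R M (supp g).

(* nonempty-or-not face of a set K in R^E: exposed by a supporting hyperplane
   (includes K itself with a = 0, b = 0) *)
Definition is_face (R : realType) (m : nat) (K F : ('I_m -> R) -> Prop) : Prop :=
  exists (a : 'I_m -> R) (b : R),
    (forall x, K x -> dotR a x <= b) /\
    (forall x, F x <-> (K x /\ dotR a x = b)).

Definition Fgamma (R : realType) (r m : nat) (M : 'M[int]_(r, m))
  (g : 'I_m -> int) (x : 'I_m -> R) : Prop :=
  in_flow_space M x /\ 2 * dotR x (intv R g) = normR (intv R g) ^+ 2.

Definition inU (R : realType) (r m : nat) (M : 'M[int]_(r, m))
  (F : ('I_m -> R) -> Prop) (g : 'I_m -> int) : Prop :=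
  is_circuit_flow R M g /\ forall x, F x -> Fgamma M g x.

(* oriented submatroids (S, eps), eps only meaningful on S *)
Definition osub (m : nat) : Type := (('I_m -> Prop) * ('I_m -> int))%type.

Definition sc_le (m : nat) (N1 N2 : osub m) : Prop :=
  (forall e, N2.1 e -> N1.1 e) /\ (forall e, N2.1 e -> N2.2 e = N1.2 e).

Definition N_of (m : nat) (l : 'I_m -> int) : osub m :=
  (fun e => l e != 0 : Prop, fun e => sgz (l e)).

Definition phi (R : realType) (r m : nat) (M : 'M[int]_(r, m))
  (F : ('I_m -> R) -> Prop) : osub m :=
  (fun e => exists g, inU M F g /\ g e != 0,
   fun e => sgz (epsilon (inhabits (fun _ : 'I_m => 0 : int))
                  (fun g => inU M F g /\ g e != 0) e)).

(* Main.v *)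
Require Import Defs.
From HB Require Import structures.
From mathcomp Require Import all_boot all_order all_algebra.
From mathcomp Require Import reals.
From mathcomp Require Import ring lra zify.
From Stdlib Require Import Classical ClassicalEpsilon.
Set Implicit Arguments. Unset Strict Implicit. Unset Printing Implicit Defensive.
Import Order.TTheory GRing.Theory Num.Theory.
Local Open Scope ring_scope.

Lemma pm1_sign (R : numDomainType) (x : R) k :
  x \in [:: -1; 0; 1] -> (-1) ^+ k * x \in [:: -1; 0; 1].
Proof.
rewrite -signr_odd; case: (odd k); rewrite ?expr0 ?expr1 ?mul1r //.
rewrite !inE => /or3P [] /eqP ->; rewrite ?mulN1r ?opprK ?oppr0 eqxx ?orbT //.
Qed.

Lemma pm1_intr (R : numDomainType) (z : int) :
  z \in [:: -1; 0; 1] -> (z%:~R : R) \in [:: -1; 0; 1].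
Proof.
by rewrite !inE => /or3P [] /eqP ->; rewrite ?rmorphN ?rmorph1 ?rmorph0 eqxx ?orbT.
Qed.

Lemma detG (R : realType) r m (M : 'M[int]_(r, m)) :
  totally_unimodular M ->
  forall n (N : 'M[R]_n) (h : 'I_n -> 'I_m),
  (forall i, (exists c, forall j, N i j = (j == c)%:R) \/ (forall j, N i j = 0) \/
             (exists i', forall j, N i j = (M i' (h j))%:~R)) ->
  \det N \in [:: -1; 0; 1].
Proof.
move=> TU; elim=> [|n IHn] N h HN.
  by rewrite det_mx00 !inE eqxx !orbT.
case: (classic (exists i, ~ exists i', forall j, N i j = (M i' (h j))%:~R)).
  move=> [i Hi]; case: (HN i) => [[c Hc]|[H0|H]]; last by [].
  - rewrite (expand_det_row N i) (bigD1 c) //= big1 => [|j /negbTE Hj]; last first.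
      by rewrite Hc Hj mul0r.
    rewrite Hc eqxx mul1r addr0 /cofactor; apply: pm1_sign.
    apply: (IHn _ (h \o lift c)) => i2.
    case: (HN (lift i i2)) => [[c' Hc']|[H0|[i' Hi']]].
    + case: (eqVneq c' c) => [Hcc|Hne].
        right; left => j2; rewrite !mxE Hc' Hcc.
        by rewrite eq_sym (negbTE (neq_lift _ _)).
      rewrite eq_sym in Hne; have [k Hk _] := unlift_some Hne.
      left; exists k => j2; rewrite !mxE Hc' Hk.
      by rewrite (inj_eq (@lift_inj _ c)).
    + by right; left => j2; rewrite !mxE H0.
    + by right; right; exists i' => j2; rewrite !mxE Hi'.
  - rewrite (expand_det_row N i) big1 ?inE ?eqxx ?orbT // => j _.
    by rewrite H0 mul0r.
move=> Hn.
have Hall : forall i, exists i', forall j, N i j = (M i' (h j))%:~R.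
  by move=> i; apply: NNPP => H; apply: Hn; exists i.
have [g Hg] := fin_all_exists Hall.
have -> : N = map_mx (intr : int -> R) (mxsub g h M).
  by apply/matrixP => i j; rewrite !mxE Hg.
rewrite det_map_mx; apply: pm1_intr; exact: TU.
Qed.

Definition confv (R : realType) (m : nat) (lam : 'I_m -> int) (y : 'I_m -> R) :=
  forall e, y e != 0 -> 0 < y e * (lam e)%:~R.

Lemma pos_div (R : realType) (a b : R) : 0 < a * b -> 0 < b / a.
Proof.
move=> H; have Ha : a != 0 by apply/eqP => Ha; rewrite Ha mul0r ltxx in H.
have -> : b / a = (a * b) / (a * a) by field.
apply: divr_gt0 => //; rewrite lt0r mulf_neq0 //=; by rewrite -expr2 sqr_ge0.
Qed.

Lemma sign_trans (R : realType) (a b c : R) : 0 < a * b -> 0 < b * c -> 0 < a * c.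
Proof.
move=> H1 H2.
have Hb : b != 0 by apply/eqP => Hb; rewrite Hb mulr0 ltxx in H1.
have Hbb : 0 < b * b by rewrite lt0r mulf_neq0 //= -expr2 sqr_ge0.
have : 0 < (a * c) * (b * b).
  have -> : (a * c) * (b * b) = (a * b) * (b * c) by ring.
  by apply: mulr_gt0.
by rewrite pmulr_lgt0.
Qed.

Lemma flow_lin (R : realType) r m (M : 'M[int]_(r, m)) (y w : 'I_m -> R) (t : R) :
  in_flow_space M y -> in_flow_space M w -> in_flow_space M (fun e => y e - t * w e).
Proof.
move=> Hy Hw i; rewrite (eq_bigr (fun e => (M i e)%:~R * y e - t * ((M i e)%:~R * w e))).
  by rewrite sumrB -mulr_sumr Hy Hw mulr0 subr0.
by move=> e _; ring.
Qed.

Lemma elim_step (R : realType) r m (M : 'M[int]_(r, m)) (lam : 'I_m -> int) (j0 : 'I_m)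
  (y z : 'I_m -> R) :
  in_flow_space M y -> confv lam y -> y j0 != 0 ->
  in_flow_space M z -> (forall e, y e = 0 -> z e = 0) -> z j0 = 0 ->
  (exists e, z e != 0) ->
  exists y2 : 'I_m -> R, [/\ in_flow_space M y2, confv lam y2, y2 j0 != 0 &
     (#|[set e | y2 e != 0%R]| < #|[set e | y e != 0%R]|)%N].
Proof.
move=> Hy Hc Hj0 Hz Hzs Hzj [e1 He1].
have Hye1 : y e1 != 0 by apply/eqP => H; move: He1; rewrite Hzs // eqxx.
have [w [Hw Hws Hwj Hwe1]] : exists w : 'I_m -> R, [/\ in_flow_space M w,
    (forall e, y e = 0 -> w e = 0), w j0 = 0 & 0 < w e1 * y e1].
  have Hne : z e1 * y e1 != 0 by rewrite mulf_neq0.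
  case: (ltrP 0 (z e1 * y e1)) => Hs.
    by exists z; split.
  exists (fun e => - z e); split.
  - move=> i; rewrite (eq_bigr (fun e => - ((M i e)%:~R * z e))) ?sumrN ?Hz ?oppr0 //.
    by move=> e _; rewrite mulrN.
  - by move=> e He; rewrite Hzs // oppr0.
  - by rewrite Hzj oppr0.
  - have : z e1 * y e1 < 0 by rewrite lt_neqAle Hne Hs.
    rewrite mulNr; lra.
pose P := fun e => 0 < w e * y e.
have Pe1 : P e1 by [].
case: (@arg_minP _ _ _ e1 P (fun e => y e / w e) Pe1) => es Pes Hmin.
set t := y es / w es.
have Ht : 0 < t by apply: pos_div.
have Hwes : w es != 0 by apply/eqP => H; move: Pes; rewrite /P H mul0r ltxx.
exists (fun e => y e - t * w e); split.
- exact: flow_lin.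
- move=> e He.
  have Hye : y e != 0.
    apply/eqP => H; move: He; rewrite H Hws // mulr0 subr0 eqxx //.
  have H1 : 0 < (y e - t * w e) * y e.
    rewrite lt_def mulf_neq0 //=.
    case: (boolP (P e)) => Pe.
      have := Hmin e Pe; rewrite -/t => Hte.
      have Hwe : w e != 0 by apply/eqP => H; move: Pe; rewrite /P H mul0r ltxx.
      have -> : (y e - t * w e) * y e = (w e * y e) * (y e / w e - t) by field.
      by apply: mulr_ge0; [exact: ltW | rewrite subr_ge0].
    have Hyy : 0 < y e * y e by rewrite lt0r mulf_neq0 //= -expr2 sqr_ge0.
    move: Pe; rewrite /P -leNgt => Pe.
    have -> : (y e - t * w e) * y e = y e * y e - t * (w e * y e) by ring.
    nra.
  exact: sign_trans H1 (Hc e Hye).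
- by rewrite Hwj mulr0 subr0.
- apply: proper_card; apply/properP; split.
    apply/subsetP => e; rewrite !inE; apply: contraNN => /eqP H.
    by rewrite H Hws // mulr0 subr0.
  exists es.
    rewrite inE; apply/eqP => H; move: Pes; rewrite /P H mulr0 ltxx //.
  by rewrite inE /t divfK // subrr eqxx.
Qed.

Definition minprop (R : realType) r m (M : 'M[int]_(r, m)) (j0 : 'I_m) (y : 'I_m -> R) :=
  forall z : 'I_m -> R, in_flow_space M z -> (forall e, y e = 0 -> z e = 0) -> z j0 = 0 ->
    forall e, z e = 0.

Lemma minimal_y (R : realType) r m (M : 'M[int]_(r, m)) (lam : 'I_m -> int) (j0 : 'I_m) :
  forall n (y : 'I_m -> R), (#|[set e | y e != 0%R]| <= n)%N ->
  in_flow_space M y -> confv lam y -> y j0 != 0 ->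
  exists y' : 'I_m -> R, [/\ in_flow_space M y', confv lam y', y' j0 != 0 & minprop M j0 y'].
Proof.
elim=> [|n IH] y Hn Hy Hc Hj.
  case: (classic (minprop M j0 y)) => Hm; first by exists y.
  exfalso; move: Hn; rewrite leqn0 => /eqP /cards0_eq /setP /(_ j0).
  by rewrite !inE Hj.
case: (classic (minprop M j0 y)) => Hm; first by exists y.
have [z [Hz1 Hz2 Hz3 [e He]]] : exists z : 'I_m -> R, [/\ in_flow_space M z,
    (forall e, y e = 0 -> z e = 0), z j0 = 0 & exists e, z e != 0].
  apply: NNPP => H; apply: Hm => z H1 H2 H3 e; apply: NNPP => He; apply: H.
  by exists z; split => //; exists e; apply/eqP.
have [y2 [H1 H2 H3 H4]] := elim_step Hy Hc Hj Hz1 Hz2 Hz3 (ex_intro _ e He).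
apply: (IH y2) => //; rewrite -ltnS; exact: leq_trans H4 Hn.
Qed.

Definition rowtype (R : realType) r m (M : 'M[int]_(r, m)) n (N : 'M[R]_n)
  (h : 'I_n -> 'I_m) (i : 'I_n) :=
  (exists c, forall j, N i j = (j == c)%:R) \/ (forall j, N i j = 0) \/
  (exists i', forall j, N i j = (M i' (h j))%:~R).

Lemma minor_rowtype (R : realType) r m (M : 'M[int]_(r, m)) n (N : 'M[R]_n) h :
  (forall i, rowtype M N h i) ->
  forall i0 c i2, rowtype M (row' i0 (col' c N)) (h \o lift c) i2.
Proof.
move=> HN i c i2.
case: (HN (lift i i2)) => [[c' Hc']|[H0|[i' Hi']]].
- case: (eqVneq c' c) => [Hcc|Hne].
    right; left => j2; rewrite !mxE Hc' Hcc.
    by rewrite eq_sym (negbTE (neq_lift _ _)).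
  rewrite eq_sym in Hne; have [k Hk _] := unlift_some Hne.
  left; exists k => j2; rewrite !mxE Hc' Hk.
  by rewrite (inj_eq (@lift_inj _ c)).
- by right; left => j2; rewrite !mxE H0.
- by right; right; exists i' => j2; rewrite !mxE Hi'.
Qed.

Lemma pm1_vector (R : realType) r m (M : 'M[int]_(r, m)) :
  totally_unimodular M -> forall (j0 : 'I_m) (y : 'I_m -> R),
  in_flow_space M y -> y j0 != 0 -> minprop M j0 y ->
  forall j, y j / y j0 \in [:: -1; 0; 1].
Proof.
move=> TU j0 y Hy Hj0 Hmin.
have [Q [HQl HQr]] : exists Q : 'M[R]_(m + r, m),
    (forall e j, Q (lshift r e) j = if (y e == 0) || (e == j0) then (e == j)%:R else 0)
    /\ (forall i j, Q (rshift m i) j = (M i j)%:~R).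
  exists (col_mx (\matrix_(e < m, j < m) (if (y e == 0) || (e == j0) then (e == j)%:R else 0 : R))
                 (\matrix_(i < r, j < m) ((M i j)%:~R : R))).
  by split => ? ?; rewrite ?col_mxEu ?col_mxEd mxE.
have Qfull : row_full Q.
  rewrite /row_full -mxrank_tr; change (row_free Q^T); rewrite -kermx_eq0.
  apply/eqP/row_matrixP => i; rewrite row0.
  set u := row i _.
  have Hu : u *m Q^T = 0 by apply/sub_kermxP; rewrite row_sub.
  have Hent : forall k, \sum_j u 0 j * Q k j = 0.
    move=> k; move/matrixP: (Hu) => /(_ 0 k); rewrite !mxE => H.
    by apply: (etrans _ H); apply: eq_bigr => j _; rewrite [Q^T j k]mxE.
  have Hz : forall j, u 0 j = 0.
    have HD : forall e, (y e == 0) || (e == j0) -> u 0 e = 0.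
      move=> e He; have := Hent (lshift r e).
      under eq_bigr do rewrite HQl He.
      rewrite (bigD1 e) //= big1 ?eqxx ?mulr1 ?addr0 // => j /negbTE Hj.
      by rewrite eq_sym Hj mulr0.
    apply: (Hmin (fun j => u 0 j)).
    - move=> i'; apply: etrans (Hent (rshift m i')); apply: eq_bigr => j _.
      by rewrite HQr mulrC.
    - by move=> e He; apply: HD; rewrite He eqxx.
    - by apply: HD; rewrite eqxx orbT.
  by apply/rowP => j; rewrite [RHS]mxE; exact: Hz.
pose f := fullrankfun Qfull.
have Hfinj : injective f by exact: fullrankfun_inj.
have HQ'u : rowsub f Q \in unitmx by exact: fullrowsub_unit.
move: Hfinj HQ'u; move: (fun_of_fin f) => {}f Hfinj HQ'u.
set Q' := rowsub f Q in HQ'u.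
have HQ'e : forall i j, Q' i j = Q (f i) j by move=> i j; rewrite mxE.
clearbody Q'.
have Hrt : forall i, rowtype M Q' id i.
  move=> i; move: (HQ'e i); move: (splitK (f i)); case: (split (f i)) => [e|i'] /= <- He.
    case: (boolP ((y e == 0) || (e == j0))) => Hc.
      by left; exists e => j; rewrite He HQl Hc eq_sym.
    by right; left => j; rewrite He HQl (negbTE Hc).
  by right; right; exists i' => j; rewrite He HQr.
pose yc := \col_j (y j / y j0).
have Hb : forall i, (Q' *m yc) i 0 = (f i == lshift r j0)%:R.
  move=> i; rewrite mxE; under eq_bigr do rewrite HQ'e mxE.
  move: (splitK (f i)); case: (split (f i)) => [e|i'] /= <-.
    under eq_bigr do rewrite HQl.
    rewrite eq_lshift; case: (boolP ((y e == 0) || (e == j0))) => Hc.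
      rewrite (bigD1 e) //= big1 ?eqxx ?mul1r ?addr0; last first.
        by move=> j /negbTE Hj; rewrite eq_sym Hj mul0r.
      case/orP: Hc => [/eqP He|/eqP ->]; last by rewrite eqxx divff.
      rewrite He mul0r; case: eqP => // Hej; move: Hj0; rewrite -Hej He eqxx //.
    rewrite big1 => [|j _]; last by rewrite mul0r.
    by move: Hc; rewrite negb_or => /andP [_ /negbTE ->].
  rewrite eq_rlshift; under eq_bigr do rewrite HQr mulrA.
  by rewrite -mulr_suml Hy mul0r.
have Hdet : \det Q' \in [:: -1; 0; 1] by apply: (detG TU (h := id)) => i; exact: Hrt.
have Hdet0 : \det Q' != 0 by rewrite -unitfE -unitmxE.
have [i0 Hi0] : exists i0, f i0 = lshift r j0.
  case: (pickP (fun i => f i == lshift r j0)) => [i0 /eqP Hi0|Hno]; first by exists i0.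
  exfalso.
  have H0 : Q' *m yc = 0 by apply/matrixP => i k; rewrite (ord1 k) Hb Hno mxE.
  have : yc = 0 by rewrite -(mulKmx HQ'u yc) H0 mulmx0.
  move/matrixP/(_ j0 0); rewrite !mxE divff //; exact/eqP/oner_neq0.
have Hbd : Q' *m yc = delta_mx i0 0.
  apply/matrixP => i k; rewrite (ord1 k) Hb mxE -Hi0 (inj_eq Hfinj) eqxx andbT //.
have Hyc : yc = invmx Q' *m delta_mx i0 0 by rewrite -Hbd mulKmx.
move=> j.
have -> : y j / y j0 = yc j 0 by rewrite mxE.
rewrite Hyc mxE (bigD1 i0) //= big1 => [|i /negbTE Hi]; last by rewrite mxE Hi mulr0.
rewrite mxE !eqxx mulr1 addr0 /invmx HQ'u mxE mxE /cofactor.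
have Hmn : \det (row' i0 (col' j Q')) \in [:: -1; 0; 1].
  by apply: (detG TU (h := id \o lift j)); exact: minor_rowtype.
have Hx := pm1_sign (i0 + j) Hmn.
rewrite !inE in Hdet; case/or3P: Hdet => /eqP Hd; rewrite Hd ?eqxx // in Hdet0 *.
  by rewrite invrN1 -(expr1 (-1 : R)); apply: pm1_sign.
by rewrite invr1 mul1r.
Qed.

Lemma N1_neq1 (R : realType) : ((-1 : R) == 1) = false.
Proof. by apply/negbTE; rewrite lt_eqF // (lt_trans (ltrN10 R) ltr01). Qed.

Lemma round_pm1 (R : realType) (s : int) (x : R) : x \in [:: -1; 0; 1] ->
  ((if x == 1 then s else if x == -1 then - s else 0)%:~R : R) = s%:~R * x.
Proof.
rewrite !inE => /or3P [] /eqP ->.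
- by rewrite N1_neq1 eqxx rmorphN mulrN1.
- rewrite (_ : (0 : R) == 1 = false); last by apply/negbTE; rewrite eq_sym oner_eq0.
  rewrite (_ : (0 : R) == -1 = false); last by apply/negbTE; rewrite eq_sym oppr_eq0 oner_eq0.
  by rewrite mulr0 rmorph0.
- by rewrite eqxx mulr1.
Qed.

Lemma conf_vec (R : realType) r m (M : 'M[int]_(r, m)) :
  totally_unimodular M -> forall lam : 'I_m -> int, in_lattice M lam ->
  forall j0, lam j0 != 0 ->
  exists g : 'I_m -> int, [/\ in_lattice M g, (forall e, g e \in [:: -1; 0; 1]),
    g j0 != 0 & (forall e, g e != 0 -> 0 < g e * lam e)].
Proof.
move=> TU lam Hlam j0 Hj0.
pose yl := fun e => ((lam e)%:~R : R).
have Hyl : in_flow_space M yl.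
  move=> i; have := congr1 (fun z : int => (z%:~R : R)) (Hlam i).
  rewrite /= rmorph_sum rmorph0 => H; apply: etrans H; apply: eq_bigr => e _.
  by rewrite rmorphM.
have Hcl : confv lam yl.
  move=> e He; have Hle : lam e != 0 by move: He; rewrite intr_eq0.
  by rewrite /yl -intrM ltr0z lt0r mulf_neq0 //= -expr2 sqr_ge0.
have Hyl0 : yl j0 != 0 by rewrite intr_eq0.
have [y [Hy Hc Hyj Hmin]] := minimal_y (leqnn _) Hyl Hcl Hyl0.
have Hv := pm1_vector TU Hy Hyj Hmin.
pose v := fun j => y j / y j0.
pose s : int := if 0 < y j0 then 1 else -1.
have Hs : 0 < (s%:~R : R) / y j0.
  rewrite /s; case: ifP => H.
    by rewrite rmorph1 mul1r invr_gt0.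
  have : y j0 < 0 by rewrite lt_neqAle Hyj leNgt H.
  rewrite rmorphN rmorph1 mulN1r oppr_gt0 invr_lt0 //.
pose g := fun e => if v e == 1 then s else if v e == -1 then - s else 0.
have Hg : forall e, (g e)%:~R = (s%:~R : R) * v e.
  by move=> e; apply: round_pm1; apply: Hv.
exists g; split.
- move=> i; apply/eqP; rewrite -(intr_eq0 R) rmorph_sum /=.
  rewrite (eq_bigr (fun e => (s%:~R / y j0) * ((M i e)%:~R * y e))).
    by rewrite -mulr_sumr Hy mulr0.
  by move=> e _; rewrite intrM Hg /v; ring.
- move=> e; rewrite /g; case: ifP => _; last case: ifP => _.
  + by rewrite /s; case: ifP.
  + by rewrite /s; case: ifP.
  + by rewrite !inE eqxx orbT.
- by rewrite /g /v divff // eqxx /s; case: ifP.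
- move=> e He.
  have HgR : (g e)%:~R != (0 : R) by rewrite intr_eq0.
  have Hye : y e != 0.
    by apply/eqP => H; move: HgR; rewrite Hg /v H mul0r mulr0 eqxx.
  rewrite -(ltr0z R) intrM Hg /v.
  have -> : (s%:~R : R) * (y e / y j0) * (lam e)%:~R = (s%:~R / y j0) * (y e * (lam e)%:~R).
    by ring.
  by apply: mulr_gt0 => //; apply: Hc.
Qed.

Lemma i1 (g l : int) : g \in [:: -1; 0; 1] -> (g != 0 -> 0 < g * l) -> `|l| = `|g| + `|l - g|.
Proof. rewrite !inE => /or3P [] /eqP -> H; lia. Qed.
Lemma i1n (g l : int) : g \in [:: -1; 0; 1] -> (g != 0 -> 0 < g * l) ->
  (absz l = absz g + absz (l - g)%R)%N.
Proof. rewrite !inE => /or3P [] /eqP -> H; lia. Qed.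
Lemma i2 (a b : int) : a != 0 -> b != 0 -> 0 <= a * b -> sgz a = sgz b.
Proof. move=> Ha Hb H; nia. Qed.
Lemma i3 (a b : int) : b != 0 -> 0 <= a * b -> `|a| = sgz b * a.
Proof. move=> Hb H; nia. Qed.
Lemma i4 (l mu : int) : l \in [:: -1; 0; 1] -> l != 0 -> 1 <= l * mu -> `|mu| = `|l| + `|mu - l|.
Proof. rewrite !inE => /or3P [] /eqP -> // _ H; lia. Qed.
Lemma i5 (a b : int) : 0 <= `|a| + `|b| - `|a + b|.
Proof. lia. Qed.
Lemma i6 (a b : int) : a \in [:: -1; 0; 1] -> b \in [:: -1; 0; 1] -> a * b < 0 ->
  2 <= `|a| + `|b| - `|a + b|.
Proof. rewrite !inE => /or3P [] /eqP -> /or3P [] /eqP -> H; lia. Qed.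

Definition L1 (R : realType) m (g : 'I_m -> int) : R := \sum_e (`|g e|)%:~R.

Lemma dot_add (R : realType) m (x : 'I_m -> R) (a b : 'I_m -> int) :
  dotR x (intv R (fun e => a e + b e)) = dotR x (intv R a) + dotR x (intv R b).
Proof. by rewrite /dotR /intv -big_split; apply: eq_bigr => e _; rewrite rmorphD mulrDr. Qed.

Lemma dot_sub (R : realType) m (x : 'I_m -> R) (a b : 'I_m -> int) :
  dotR x (intv R (fun e => a e - b e)) = dotR x (intv R a) - dotR x (intv R b).
Proof. by rewrite /dotR /intv -sumrB; apply: eq_bigr => e _; rewrite rmorphB mulrBr. Qed.

Lemma L1_split (R : realType) m (a b c : 'I_m -> int) :
  (forall e, `|a e| = `|b e| + `|c e|) -> L1 R a = L1 R b + L1 R c.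
Proof. by move=> H; rewrite /L1 -big_split; apply: eq_bigr => e _; rewrite H rmorphD. Qed.

Lemma dot_self (R : realType) m (g : 'I_m -> int) :
  (forall e, g e \in [:: -1; 0; 1]) -> dotR (intv R g) (intv R g) = L1 R g.
Proof.
move=> Hg; rewrite /dotR /L1 /intv; apply: eq_bigr => e _.
by have := Hg e; rewrite !inE => /or3P [] /eqP ->; rewrite ?rmorphN ?rmorph1 ?rmorph0 ?mulr0 ?mulr1 ?mulN1r ?opprK.
Qed.

Lemma sq_norm (R : realType) m (g : 'I_m -> int) :
  (forall e, g e \in [:: -1; 0; 1]) -> normR (intv R g) ^+ 2 = L1 R g.
Proof.
move=> Hg; rewrite /normR sqr_sqrtr; first exact: dot_self.
by apply: sumr_ge0 => e _; rewrite -expr2 sqr_ge0.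
Qed.

Lemma vor_circ (R : realType) r m (M : 'M[int]_(r, m)) (x : 'I_m -> R) (g : 'I_m -> int) :
  voronoi0 M x -> in_lattice M g -> (forall e, g e \in [:: -1; 0; 1]) ->
  2 * dotR x (intv R g) <= L1 R g.
Proof.
move=> [Hx Hv] Hl Hp; have := Hv g Hl.
rewrite /normR ler_sqrt; last by apply: sumr_ge0 => e _; rewrite -expr2 sqr_ge0.
have -> : dotR (fun e => x e - intv R g e) (fun e => x e - intv R g e) =
    dotR x x - 2 * dotR x (intv R g) + dotR (intv R g) (intv R g).
  rewrite /dotR mulr_sumr -sumrB -big_split /=; apply: eq_bigr => e _; ring.
rewrite dot_self //; move: (dotR x x) (dotR x (intv R g)) (L1 R g) => a b c; lra.
Qed.

Lemma lat_add r m (M : 'M[int]_(r, m)) (a b : 'I_m -> int) :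
  in_lattice M a -> in_lattice M b -> in_lattice M (fun e => a e + b e).
Proof.
move=> Ha Hb i; rewrite (eq_bigr (fun e => M i e * a e + M i e * b e)).
  by rewrite big_split /= Ha Hb addr0.
by move=> e _; rewrite mulrDr.
Qed.

Lemma lat_sub r m (M : 'M[int]_(r, m)) (a b : 'I_m -> int) :
  in_lattice M a -> in_lattice M b -> in_lattice M (fun e => a e - b e).
Proof.
move=> Ha Hb i; rewrite (eq_bigr (fun e => M i e * a e - M i e * b e)).
  by rewrite sumrB /= Ha Hb subr0.
by move=> e _; rewrite mulrBr.
Qed.

Lemma lemW (R : realType) r m (M : 'M[int]_(r, m)) :
  totally_unimodular M -> forall x : 'I_m -> R, voronoi0 M x ->
  forall n (lam : 'I_m -> int), (\sum_e absz (lam e) <= n)%N -> in_lattice M lam ->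
  2 * dotR x (intv R lam) <= L1 R lam.
Proof.
move=> TU x Hx; elim=> [|n IH] lam Hn Hlam;
  (case: (pickP (fun e => lam e != 0)) => [j0 Hj0 | Hz]; last first).
- rewrite /dotR /L1 /intv !big1 ?mulr0 ?lexx // => e _; move/negbT: (Hz e); rewrite negbK => /eqP ->.
    by rewrite normr0 rmorph0.
  by rewrite rmorph0 mulr0.
- exfalso; move: Hn; rewrite leqn0 => /eqP H.
  have : (absz (lam j0) <= \sum_e absz (lam e))%N by rewrite (bigD1 j0) //= leq_addr.
  by rewrite H leqn0 absz_eq0 (negbTE Hj0).
- rewrite /dotR /L1 /intv !big1 ?mulr0 ?lexx // => e _; move/negbT: (Hz e); rewrite negbK => /eqP ->.
    by rewrite normr0 rmorph0.
  by rewrite rmorph0 mulr0.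
have [g [Hgl Hgp Hgj Hgc]] := conf_vec R TU Hlam Hj0.
pose lam' := fun e => lam e - g e.
have Hl' : in_lattice M lam' by apply: lat_sub.
have Hper : forall e, `|lam e| = `|g e| + `|lam' e| by move=> e; exact: i1 (Hgp e) (Hgc e).
have Hmeas : (\sum_e absz (lam' e) <= n)%N.
  rewrite -ltnS; apply: leq_trans Hn.
  have -> : (\sum_e absz (lam e) = \sum_e absz (g e) + \sum_e absz (lam' e))%N.
    by rewrite -big_split; apply: eq_bigr => e _; exact: i1n (Hgp e) (Hgc e).
  rewrite -addn1 addnC leq_add2r (bigD1 j0) //= -[1%N]addn0 leq_add //.
  by rewrite absz_gt0.
have H1 := IH lam' Hmeas Hl'.
have H2 := vor_circ Hx Hgl Hgp.
have Hd : dotR x (intv R lam') = dotR x (intv R lam) - dotR x (intv R g) by apply: dot_sub.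
have HL : L1 R lam = L1 R g + L1 R lam' by apply: L1_split.
rewrite HL; rewrite Hd in H1; move: H1 H2.
move: (dotR x (intv R lam')) (dotR x (intv R lam)) (dotR x (intv R g)) (L1 R g) (L1 R lam') => a b c d f.
lra.
Qed.

Lemma sign_lem (R : realType) r m (M : 'M[int]_(r, m)) :
  totally_unimodular M -> forall x : 'I_m -> R, voronoi0 M x ->
  forall g1 g2 : 'I_m -> int,
  in_lattice M g1 -> (forall e, g1 e \in [:: -1; 0; 1]) -> 2 * dotR x (intv R g1) = L1 R g1 ->
  in_lattice M g2 -> (forall e, g2 e \in [:: -1; 0; 1]) -> 2 * dotR x (intv R g2) = L1 R g2 ->
  forall e, 0 <= g1 e * g2 e.
Proof.
move=> TU x Hx g1 g2 Hl1 Hp1 He1 Hl2 Hp2 He2 e; rewrite leNgt; apply/negP => Hneg.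
pose lam := fun f => g1 f + g2 f.
have Hl : in_lattice M lam by apply: lat_add.
have HW := lemW TU Hx (leqnn _) Hl.
rewrite dot_add in HW.
have Hdiff : L1 R g1 + L1 R g2 - L1 R lam =
      ((\sum_f (`|g1 f| + `|g2 f| - `|g1 f + g2 f|)) %:~R : R).
  rewrite rmorph_sum /L1 -big_split -sumrB /=; apply: eq_bigr => f _.
  by rewrite rmorphB rmorphD.
have H2 : (2 : int) <= \sum_f (`|g1 f| + `|g2 f| - `|g1 f + g2 f|).
  rewrite (bigD1 e) //=; apply: ler_wpDr; first by apply: sumr_ge0 => f _; apply: i5.
  exact: i6.
have H2R : (2 : R) <= (\sum_f (`|g1 f| + `|g2 f| - `|g1 f + g2 f|))%:~R.
  by rewrite -(ler_int R) in H2.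
rewrite -Hdiff in H2R.
have Hsum : L1 R lam + 2 <= L1 R g1 + L1 R g2.
  by move: H2R; move: (L1 R g1) (L1 R g2) (L1 R lam) => a b c; lra.
move: HW Hsum He1 He2.
move: (dotR x (intv R g1)) (dotR x (intv R g2)) (L1 R g1) (L1 R g2) (L1 R lam) => a b c d f.
lra.
Qed.

Lemma i7 (l a b : int) : l \in [:: -1; 0; 1] -> l != 0 -> b != 0 -> sgz l = sgz b ->
  0 <= a * b -> 0 <= l * a.
Proof. rewrite !inE => /or3P [] /eqP -> // _ Hb Hs H; nia. Qed.
Lemma i8 (l b : int) : l \in [:: -1; 0; 1] -> l != 0 -> b != 0 -> sgz l = sgz b -> 1 <= l * b.
Proof. rewrite !inE => /or3P [] /eqP -> // _ Hb Hs; lia. Qed.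

Lemma abs_sum_conf (I : finType) (P : pred I) (a : I -> int) :
  (forall i j, P i -> P j -> 0 <= a i * a j) ->
  `|\sum_(i | P i) a i| = \sum_(i | P i) `|a i|.
Proof.
move=> Ha.
case: (pickP (fun i => P i && (a i != 0))) => [i0 /andP [Pi0 Hi0] | Hz].
  have Hs : forall i, P i -> `|a i| = sgz (a i0) * a i.
    by move=> i Pi; apply: i3 => //; exact: Ha.
  have E : sgz (a i0) * \sum_(i | P i) a i = \sum_(i | P i) `|a i|.
    by rewrite mulr_sumr; apply: eq_bigr => i Pi; rewrite Hs.
  have -> : `|\sum_(i | P i) a i| = `|sgz (a i0) * \sum_(i | P i) a i|.
    by rewrite normrM normr_sgz Hi0 mul1r.
  by rewrite E ger0_norm // sumr_ge0.
rewrite !big1 ?normr0 // => i Pi; move: (Hz i); rewrite Pi /= => /negbT; rewrite negbK => /eqP ->//.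
Qed.

Theorem mainTheorem13 (R : realType) (r m : nat) (M : 'M[int]_(r, m)) :
  totally_unimodular M ->
  forall F : ('I_m -> R) -> Prop,
    is_face (voronoi0 M) F -> (exists x, F x) ->
  forall l : 'I_m -> int, is_circuit_flow R M l ->
    (inU M F l <-> sc_le (phi M F) (N_of l)).
Proof.
move=> TU F [a [b [Hab HF]]] [x0 Fx0] l Hl.
have FV : forall x, F x -> voronoi0 M x by move=> x /HF [].
have key : forall g x, inU M F g -> F x -> [/\ in_lattice M g,
    (forall e, g e \in [:: -1; 0; 1]) & 2 * dotR x (intv R g) = L1 R g].
  move=> g x [[Hp [Hlat _]] HFg] Fx; have [_ H] := HFg x Fx; split => //.
  by rewrite H sq_norm.
have sgn : forall g1 g2 x, inU M F g1 -> inU M F g2 -> F x -> forall e, 0 <= g1 e * g2 e.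
  move=> g1 g2 x H1 H2 Fx; have [? ? ?] := key _ _ H1 Fx; have [? ? ?] := key _ _ H2 Fx.
  exact: (sign_lem TU (FV x Fx)).
pose eg := fun e => epsilon (inhabits (fun _ : 'I_m => 0 : int))
                            (fun g => inU M F g /\ g e != 0).
have Heg : forall e, (exists g, inU M F g /\ g e != 0) -> inU M F (eg e) /\ eg e e != 0.
  move=> e H.
  exact: (epsilon_spec (inhabits (fun _ : 'I_m => 0 : int)) (fun g => inU M F g /\ g e != 0) H).
have [Hlp [Hll _]] := Hl.
split.
  move=> Hin; split => e /= He.
    by exists l.
  have [H1 H2] := Heg e (ex_intro _ l (conj Hin He)).
  exact: (i2 He H2 (sgn _ _ _ Hin H1 Fx0 e)).
move=> [H1 H2]; split => // x Fx.
have Vx := FV x Fx.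
split; first by case: Vx.
rewrite sq_norm //.
pose P := fun e => l e != 0.
have HegP : forall e, P e -> inU M F (eg e) /\ eg e e != 0.
  by move=> e He; apply: Heg; exact: H1 e He.
have HegS : forall e, P e -> sgz (l e) = sgz (eg e e) by move=> e He; exact: H2 e He.
pose mu := fun f => \sum_(e | P e) eg e f.
have Hmu_lat : in_lattice M mu.
  move=> i; rewrite /mu.
  under eq_bigr do rewrite mulr_sumr.
  rewrite exchange_big big1 // => e Pe.
  by have [Hlat _ _] := key _ _ (HegP e Pe).1 Fx0; exact: Hlat i.
have Hdot_mu : 2 * dotR x (intv R mu) = \sum_(e | P e) L1 R (eg e).
  rewrite /dotR /intv /mu.
  under eq_bigr do rewrite rmorph_sum mulr_sumr.
  rewrite exchange_big mulr_sumr; apply: eq_bigr => e Pe.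
  by have [_ _ <-] := key _ _ (HegP e Pe).1 Fx.
have HL1_mu : L1 R mu = \sum_(e | P e) L1 R (eg e).
  rewrite /L1 /mu.
  under eq_bigr => f _.
    rewrite abs_sum_conf; last first.
      by move=> i j Pi Pj; exact: (sgn _ _ _ (HegP i Pi).1 (HegP j Pj).1 Fx0 f).
    rewrite rmorph_sum.
  over.
  by rewrite exchange_big.
pose nu := fun f => mu f - l f.
have Hnu_lat : in_lattice M nu by apply: lat_sub.
have Hsplit : L1 R mu = L1 R l + L1 R nu.
  apply: L1_split => f; case: (boolP (P f)) => Pf.
    apply: (i4 (Hlp f) Pf).
    rewrite /mu mulr_sumr (bigD1 f) //=.
    have [He1 He2] := HegP f Pf.
    have Hf := i8 (Hlp f) Pf He2 (HegS f Pf).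
    have Hr : 0 <= \sum_(i < m | P i && (i != f)) l f * eg i f.
      apply: sumr_ge0 => e /andP [Pe _].
      exact: (i7 (Hlp f) Pf He2 (HegS f Pf) (sgn _ _ _ (HegP e Pe).1 He1 Fx0 f)).
    by have := lerD Hf Hr; rewrite addr0.
  move: Pf; rewrite /P negbK => /eqP Hl0.
  by rewrite /nu Hl0 normr0 add0r subr0.
have W1 := lemW TU Vx (leqnn _) Hnu_lat.
have W2 := vor_circ Vx Hll Hlp.
have Hdmu : dotR x (intv R nu) = dotR x (intv R mu) - dotR x (intv R l) by apply: dot_sub.
rewrite Hdmu in W1; rewrite -HL1_mu Hsplit in Hdot_mu.
move: W1 W2 Hdot_mu.
move: (dotR x (intv R mu)) (dotR x (intv R l)) (L1 R l) (L1 R nu) => p q s t.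
lra.
Qed.
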